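(* Let $(X,\sigma,\tau)$ be a full, separable, chronologically dense Lorentzian metric space satisfying the S-property which is globally hyperbolic with respect to a compatible causal relation $\leq$, and let $(\overline{X},\sigma_{chr},\overline{\tau})$ be its c-completion. Assume that no two distinct points of $\partial X$ are related by $\leq_{\overline{\tau}}$. Then for any $(P,F)\in\overline{X}$ and any $\sigma_{chr}$-neighbourhood $U$ of $(P,F)$ there is a $\sigma_{chr}$-neighbourhood $V$ of $(P,F)$ such that whenever $a,b,c\in\overline{X}$ satisfy $a\,\overline{\ll}\,b\,\overline{\ll}\,c$ and $a,c\in V$, then $b\in U$.
   Context: A Lorentzian metric space $(X,\sigma,\tau)$ is a topological space with $\tau:X\times X\to[0,\infty]$ lower semicontinuous and satisfying $\tau(x,z)\geq\tau(x,y)+\tau(y,z)$ whenever $\tau(x,y),\tau(y,z)>0$. Write $x\ll y$ iff $\tau(x,y)>0$, $I^\pm(x)$ for chronological future/past, $I^\pm[A]=\bigcup_{a\in A}I^\pm(a)$. Full: $I^+(x)\neq\emptyset\neq I^-(x)$ for all $x$. Future (resp. past) chain: $x_n\ll x_{n+1}$ (resp. $x_{n+1}\ll x_n$) for all $n$. Separable: there is a countable $S$ with $x\ll y\Rightarrow\exists s\in S$, $x\ll s\ll y$. Chronologically dense: every $x$ with $I^-(x)\neq\emptyset$ (resp. $I^+(x)\neq\emptyset$) is the $\sigma$-limit of a future (resp. past) chain. A compatible causal relation is a pre-order $\leq$ containing $\ll$ with $\tau(x,z)\geq\tau(x,y)+\tau(y,z)$ for $x\leq y\leq z$; with $J(x,y)=\{z:x\leq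 z\leq y\}$, $X$ is globally hyperbolic if $\leq$ is antisymmetric and every $J(x,y)$ is $\sigma$-compact. Past set: $P=I^-[P]$; $\downarrow S=I^-[\{p:p\ll q\ \forall q\in S\}]$; IP: past set not the union of two proper past subsets; PIP: IP of the form $I^-(p)$; future sets, $\uparrow S$, IF, PIF dually. For nonempty IP $P$ and IF $F$, $P\sim_S F$ iff $P$ is a maximal IP in $\downarrow F$ and $F$ a maximal IF in $\uparrow P$; $P\sim_S\emptyset$ (resp. $\emptyset\sim_S F$) if the nonempty $P$ (resp. $F$) is S-related to no nonempty IF (resp. IP). S-property: for all $x$, $I^-(x)\sim_S I^+(x)$, and no PIF other than $I^+(x)$ (resp. no PIP other than $I^-(x)$) is S-related to $I^-(x)$ (resp. $I^+(x)$). c-completion $\overline X=\{(P,F):P\sim_S F\}$, $\mathbf{i}(x)=(I^-(x),I^+(x))$, $\partial X=\overline X\setminus\mathbf{i}(X)$. $\sigma_{chr}$: closed sets are those $C$ with $L(s)\subset C$ for every sequence $s$ in $C$, where $(P,F)\in L(\{(P_n,F_n)\})$ iff ($P\neq\emptyset\Rightarrow P\subset LI(P_n)$ and $P$ is a maximal IP in $LS(P_n)$) and ($F\neq\emptyset\Rightarrow F\subset LI(F_n)$ and $F$ is a maximal IF in $LS(F_n)$), $LI,LS$ the set-theoretic lower/upper limits. $\overline\tau((P,F),(P',F'))=0$ if $F=\emptyset$ or $P'=\emptyset$, otherwise $\lim_n\tau(q_n,p'_n)$ for a past chain $\{q_n\}$ with $I^+[\{q_n\}]=F$ and a future chain $\{p'_n\}$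 with $I^-[\{p'_n\}]=P'$. $a\,\overline\ll\, b$ iff $\overline\tau(a,b)>0$; $\overline I^\pm(a)$ denote the corresponding futures/pasts in $\overline X$; $a\leq_{\overline\tau}b$ iff $\overline I^-(a)\subset\overline I^-(b)$ and $\overline I^+(b)\subset\overline I^+(a)$. *)

(* Defs.v *)
From HB Require Import structures.
From mathcomp Require Import all_boot all_order all_algebra.
From mathcomp Require Import all_classical all_reals all_analysis.
Set Implicit Arguments. Unset Strict Implicit. Unset Printing Implicit Defensive.
Import Order.TTheory GRing.Theory Num.Theory.
Local Open Scope classical_set_scope.
Local Open Scope ring_scope.

Section LMS.
Context {R : realType} {X : topologicalType} (tau : X * X -> \bar R).
Local Open Scope ereal_scope.

Definition ll (x y : X) : Prop := 0 < tau (x, y).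
Definition Ifut (x : X) : set X := [set y | ll x y].
Definition Ipast (x : X) : set X := [set y | ll y x].
Definition Ifut_set (A : set X) : set X := [set y | exists2 a, A a & ll a y].
Definition Ipast_set (A : set X) : set X := [set y | exists2 a, A a & ll y a].

Definition lorentzian_metric : Prop :=
  (forall x y, 0 <= tau (x, y)) /\
  lower_semicontinuous tau /\
  (forall x y z, ll x y -> ll y z -> tau (x, y) + tau (y, z) <= tau (x, z)).

Definition full : Prop := forall x, Ifut x !=set0 /\ Ipast x !=set0.

Definition future_chain (s : nat -> X) : Prop := forall n, ll (s n) (s n.+1).
Definition past_chain (s : nat -> X) : Prop := forall n, ll (s n.+1) (s n).

Definition separable : Prop :=
  exists S : set X, countable S /\
    forall x y, ll x y -> exists2 s, S s & ll x s /\ ll s y.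

Definition chronologically_dense : Prop :=
  (forall x, Ipast x !=set0 -> exists s, future_chain s /\ s @ \oo --> x) /\
  (forall x, Ifut x !=set0 -> exists s, past_chain s /\ s @ \oo --> x).

Definition compatible_causal (le : X -> X -> Prop) : Prop :=
  (forall x, le x x) /\ (forall x y z, le x y -> le y z -> le x z) /\
  (forall x y, ll x y -> le x y) /\
  (forall x y z, le x y -> le y z -> tau (x, y) + tau (y, z) <= tau (x, z)).

Definition causal_diamond (le : X -> X -> Prop) (x y : X) : set X :=
  [set z | le x z /\ le z y].

Definition globally_hyperbolic (le : X -> X -> Prop) : Prop :=
  (forall x y, le x y -> le y x -> x = y) /\
  (forall x y, compact (causal_diamond le x y)).

Definition past_set (P : set X) : Prop := P = Ipast_set P.
Definition future_set (F : set X) : Prop := F = Ifut_set F.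

Definition IP (P : set X) : Prop :=
  past_set P /\
  ~ (exists P1 P2, past_set P1 /\ past_set P2 /\ P1 `<` P /\ P2 `<` P /\
       P = P1 `|` P2).
Definition IF (F : set X) : Prop :=
  future_set F /\
  ~ (exists F1 F2, future_set F1 /\ future_set F2 /\ F1 `<` F /\ F2 `<` F /\
       F = F1 `|` F2).

Definition down (S : set X) : set X :=
  Ipast_set [set p | forall q, S q -> ll p q].
Definition up (S : set X) : set X :=
  Ifut_set [set p | forall q, S q -> ll q p].

Definition maximal_IP_in (P A : set X) : Prop :=
  IP P /\ P `<=` A /\ forall P', IP P' -> P `<=` P' -> P' `<=` A -> P' = P.
Definition maximal_IF_in (F A : set X) : Prop :=
  IF F /\ F `<=` A /\ forall F', IF F' -> F `<=` F' -> F' `<=` A -> F' = F.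

Definition Srel_ne (P F : set X) : Prop :=
  IP P /\ P !=set0 /\ IF F /\ F !=set0 /\
  maximal_IP_in P (down F) /\ maximal_IF_in F (up P).

Definition Srel (P F : set X) : Prop :=
  Srel_ne P F \/
  (IP P /\ P !=set0 /\ F = set0 /\ ~ (exists F', Srel_ne P F')) \/
  (P = set0 /\ IF F /\ F !=set0 /\ ~ (exists P', Srel_ne P' F)).

Definition S_property : Prop :=
  forall x,
    Srel (Ipast x) (Ifut x) /\
    (forall p, IF (Ifut p) -> Srel (Ipast x) (Ifut p) -> Ifut p = Ifut x) /\
    (forall p, IP (Ipast p) -> Srel (Ipast p) (Ifut x) -> Ipast p = Ipast x).

Definition cc : set (set X * set X) := [set a | Srel a.1 a.2].
Definition cc_inj (x : X) : set X * set X := (Ipast x, Ifut x).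
Definition cc_boundary : set (set X * set X) := cc `\` range cc_inj.

Definition LI (A : nat -> set X) : set X :=
  [set x | exists N, forall n, (N <= n)%N -> A n x].
Definition LS (A : nat -> set X) : set X :=
  [set x | forall N, exists2 n, (N <= n)%N & A n x].

Definition Lchr (s : nat -> set X * set X) : set (set X * set X) :=
  [set a | cc a /\
    (a.1 !=set0 -> a.1 `<=` LI (fun n => (s n).1) /\
                    maximal_IP_in a.1 (LS (fun n => (s n).1))) /\
    (a.2 !=set0 -> a.2 `<=` LI (fun n => (s n).2) /\
                    maximal_IF_in a.2 (LS (fun n => (s n).2)))].

Definition chr_closed (C : set (set X * set X)) : Prop :=
  C `<=` cc /\ forall s, (forall n, C (s n)) -> Lchr s `<=` C.
Definition chr_open (O : set (set X * set X)) : Prop :=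
  O `<=` cc /\ chr_closed (cc `\` O).
Definition chr_nbhd (U : set (set X * set X)) (a : set X * set X) : Prop :=
  exists O, chr_open O /\ O a /\ O `<=` U.

Definition chains_for (F P' : set X) (qp : (nat -> X) * (nat -> X)) : Prop :=
  past_chain qp.1 /\ Ifut_set (range qp.1) = F /\
  future_chain qp.2 /\ Ipast_set (range qp.2) = P'.

Definition taubar (a b : set X * set X) : \bar R :=
  if pselect (a.2 = set0 \/ b.1 = set0) is left _ then 0 else
  match pselect (exists qp, chains_for a.2 b.1 qp) with
  | left e => let qp := proj1_sig (cid e) in
              limn (fun n => tau (qp.1 n, qp.2 n))
  | right _ => 0
  end.

Definition llbar (a b : set X * set X) : Prop := 0 < taubar a b.
Definition Ifutbar (a : set X * set X) := [set b | cc b /\ llbar a b].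
Definition Ipastbar (a : set X * set X) := [set b | cc b /\ llbar b a].
Definition le_taubar (a b : set X * set X) : Prop :=
  Ipastbar a `<=` Ipastbar b /\ Ifutbar b `<=` Ifutbar a.

End LMS.

(* Main.v *)
Require Import Defs.
From HB Require Import structures.
From mathcomp Require Import all_boot all_order all_algebra.
From mathcomp Require Import all_classical all_reals all_analysis.
Set Implicit Arguments. Unset Strict Implicit. Unset Printing Implicit Defensive.
Import Order.TTheory GRing.Theory Num.Theory.
Local Open Scope classical_set_scope.

Section Main.
Context {R : realType} {X : topologicalType} (tau : X * X -> \bar R).
Hypothesis Hlm : lorentzian_metric tau.
Hypothesis Hsep : separable tau.

Local Notation ll := (ll tau).

Lemma ll_trans x y z : ll x y -> ll y z -> ll x z.
Proof.
rewrite /Defs.ll => xy yz; case: Hlm => _ [_ H].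
apply: (lt_le_trans _ (H x y z xy yz)); exact: adde_gt0.
Qed.

Lemma ll_interp x y : ll x y -> exists s, ll x s /\ ll s y.
Proof. case: Hsep => S [_ HS] /HS [s _ ?]; by exists s. Qed.

Lemma Ipast_set_past A : past_set tau (Ipast_set tau A).
Proof.
apply/seteqP; split => y /=.
- move=> [a Aa ya]; have [s [ys sa]] := ll_interp ya.
  by exists s => //; exists a.
- by move=> [z [a Aa za] yz]; exists a => //; apply: ll_trans yz za.
Qed.

Lemma Ifut_set_fut A : future_set tau (Ifut_set tau A).
Proof.
apply/seteqP; split => y /=.
- move=> [a Aa ya]; have [s [ys sa]] := ll_interp ya.
  by exists s => //; exists a.
- by move=> [z [a Aa za] yz]; exists a => //; apply: ll_trans za yz.
Qed.

Lemma past_mem P x y : past_set tau P -> P y -> ll x y -> P x.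
Proof. by move=> PP Py xy; rewrite PP; exists y. Qed.

Lemma fut_mem F x y : future_set tau F -> F y -> ll y x -> F x.
Proof. by move=> PP Py xy; rewrite PP; exists y. Qed.

Lemma past_up P x : past_set tau P -> P x -> exists2 y, P y & ll x y.
Proof. by move=> PP; rewrite {1}PP => -[y]; exists y. Qed.

Lemma fut_down F x : future_set tau F -> F x -> exists2 y, F y & ll y x.
Proof. by move=> PP; rewrite {1}PP => -[y]; exists y. Qed.

Lemma IP_dir P x y : IP tau P -> P x -> P y ->
  exists z, [/\ P z, ll x z & ll y z].
Proof.
move=> [PP NP] Px Py; apply: contrapT => Hn; apply: NP.
exists (Ipast_set tau (P `&` Ifut tau x)), (Ipast_set tau (P `&` ~` Ifut tau x)).
split; first exact: Ipast_set_past.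
split; first exact: Ipast_set_past.
split.
  split; first by move=> z [w [Pw _] zw]; apply: past_mem zw.
  move=> /(_ y Py) [w [Pw xw] yw]; apply: Hn; by exists w.
split.
  split; first by move=> z [w [Pw _] zw]; apply: past_mem zw.
  by move=> /(_ x Px) [w [Pw nxw] xw].
apply/seteqP; split => z.
- move=> Pz; have [w Pw zw] := past_up PP Pz.
  have [xw|nxw] := pselect (ll x w); [left|right]; by exists w.
- by case=> -[w [Pw _] zw]; apply: past_mem zw.
Qed.

Lemma IF_dir F x y : IF tau F -> F x -> F y ->
  exists z, [/\ F z, ll z x & ll z y].
Proof.
move=> [PP NP] Px Py; apply: contrapT => Hn; apply: NP.
exists (Ifut_set tau (F `&` Ipast tau x)), (Ifut_set tau (F `&` ~` Ipast tau x)).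
split; first exact: Ifut_set_fut.
split; first exact: Ifut_set_fut.
split.
  split; first by move=> z [w [Pw _] zw]; apply: fut_mem zw.
  move=> /(_ y Py) [w [Pw xw] yw]; apply: Hn; by exists w.
split.
  split; first by move=> z [w [Pw _] zw]; apply: fut_mem zw.
  by move=> /(_ x Px) [w [Pw nxw] xw].
apply/seteqP; split => z.
- move=> Pz; have [w Pw zw] := fut_down PP Pz.
  have [xw|nxw] := pselect (ll w x); [left|right]; by exists w.
- by case=> -[w [Pw _] zw]; apply: fut_mem zw.
Qed.


Lemma enum_S (x0 : X) : exists (S : set X) (e : nat -> X), 
  (forall x y, ll x y -> exists2 n, S (e n) & ll x (e n) /\ ll (e n) y).
Proof.
case: Hsep => S [/countable_injP [f finj] HS].
pose e n := match pselect (exists s, S s /\ f s = n) with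
  | left h => proj1_sig (cid h) | right _ => x0 end.
exists S, e => x y /HS [s Ss [xs sy]].
have he : e (f s) = s.
  rewrite /e; case: pselect => [h|]; last by move=> nh; exfalso; apply: nh; exists s.
  case: cid => s' [Ss' fs'] /=; apply: finj => //; by rewrite in_setE.
by exists (f s); rewrite he.
Qed.

Lemma IP_chain P : IP tau P -> P !=set0 ->
  exists p : nat -> X, [/\ future_chain tau p, (forall n, P (p n)) &
     (forall x, P x -> exists n, ll x (p n))].
Proof.
move=> IPP [x0 Px0]; have PP := IPP.1.
have [S [e He]] := enum_S x0.
pose Q n z w := P w /\ ll z w /\ (P (e n) -> ll (e n) w).
pose step n z := match pselect (exists w, Q n z w) with
  | left h => proj1_sig (cid h) | right _ => z end.
have Hstep n z : P z -> Q n z (step n z).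
  move=> Pz; rewrite /step; case: pselect => [h|]; first by case: cid.
  move=> nh; exfalso; apply: nh.
  have [Pen|nPen] := pselect (P (e n)).
    have [w [Pw zw ew]] := IP_dir IPP Pz Pen; by exists w.
  have [w Pw zw] := past_up PP Pz; by exists w.
pose p := fix p n := if n is m.+1 then step m (p m) else x0.
have Pp n : P (p n) by elim: n => //= n IH; have [] := Hstep n _ IH.
exists p; split => //.
  by move=> n /=; have [_ []] := Hstep n _ (Pp n).
move=> x Px; have [w Pw xw] := past_up PP Px.
have [n _ [xe ew]] := He _ _ xw.
exists n.+1; apply: ll_trans xe _ => /=.
have [_ [_ H]] := Hstep n _ (Pp n); apply: H; exact: past_mem ew.
Qed.

Lemma IF_chain F : IF tau F -> F !=set0 ->
  exists q : nat -> X, [/\ past_chain tau q, (forall n, F (q n)) &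
     (forall x, F x -> exists n, ll (q n) x)].
Proof.
move=> IPP [x0 Px0]; have PP := IPP.1.
have [S [e He]] := enum_S x0.
pose Q n z w := F w /\ ll w z /\ (F (e n) -> ll w (e n)).
pose step n z := match pselect (exists w, Q n z w) with
  | left h => proj1_sig (cid h) | right _ => z end.
have Hstep n z : F z -> Q n z (step n z).
  move=> Pz; rewrite /step; case: pselect => [h|]; first by case: cid.
  move=> nh; exfalso; apply: nh.
  have [Pen|nPen] := pselect (F (e n)).
    have [w [Pw zw ew]] := IF_dir IPP Pz Pen; by exists w.
  have [w Pw zw] := fut_down PP Pz; by exists w.
pose p := fix p n := if n is m.+1 then step m (p m) else x0.
have Pp n : F (p n) by elim: n => //= n IH; have [] := Hstep n _ IH.
exists p; split => //.
  by move=> n /=; have [_ []] := Hstep n _ (Pp n).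
move=> x Px; have [w Pw xw] := fut_down PP Px.
have [n _ [xe ew]] := He _ _ xw.
exists n.+1; apply: ll_trans _ ew => /=.
have [_ [_ H]] := Hstep n _ (Pp n); apply: H; exact: fut_mem xe.
Qed.


Lemma cc_IP a : cc tau a -> a.1 !=set0 -> IP tau a.1.
Proof.
case=> [[]//|[[]//|[E _] [x]]]; by rewrite E.
Qed.

Lemma cc_IF a : cc tau a -> a.2 !=set0 -> IF tau a.2.
Proof.
case=> [[_ [_ []]]//|[[_ [_ [E _]]] [x]|[_ []]//]]; by rewrite E.
Qed.

Lemma cc_ne a : cc tau a -> a.1 !=set0 -> a.2 !=set0 -> Srel_ne tau a.1 a.2.
Proof.
case=> [//|[[_ [_ [E _]]] _ [x]|[E _] [x]]]; by rewrite E.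
Qed.

Lemma fc_mono p : future_chain tau p -> forall k n, (k <= n)%N ->
  forall x, ll x (p k) -> ll x (p n).
Proof.
move=> pc k n kn x xk; elim: n kn => [|n IH]; first by rewrite leqn0 => /eqP <-.
rewrite leq_eqVlt => /orP [/eqP <-//|]; rewrite ltnS => /IH H.
exact: ll_trans H (pc n).
Qed.

Lemma pc_mono q : past_chain tau q -> forall k n, (k <= n)%N ->
  forall x, ll (q k) x -> ll (q n) x.
Proof.
move=> pc k n kn x xk; elim: n kn => [|n IH]; first by rewrite leqn0 => /eqP <-.
rewrite leq_eqVlt => /orP [/eqP <-//|]; rewrite ltnS => /IH H.
exact: ll_trans (pc n) H.
Qed.

Lemma llbar_meet a b : llbar tau a b -> exists r, a.2 r /\ b.1 r.
Proof.
rewrite /llbar /taubar; case: pselect => [_|_]; first by rewrite ltxx.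
case: pselect => [e|_]; last by rewrite ltxx.
case: (cid e) => -[q p] [qc [qF [pc pP]]] /=.
apply: contraPP => Hn.
have H0 : (fun n => tau (q n, p n)) = (fun _ => 0%E).
  apply/funext => n; apply/eqP; rewrite eq_le; apply/andP; split; last first.
    by case: Hlm.
  rewrite leNgt; apply/negP => H; apply: Hn; exists (q n); split.
    by rewrite -qF; exists (q n.+1); [by exists n.+1| exact: qc].
  by rewrite -pP; exists (p n); [by exists n|].
by rewrite H0 lim_cst ?ltxx.
Qed.

Lemma llbar_of a b r : a.2 r -> b.1 r -> IF tau a.2 -> IP tau b.1 ->
  llbar tau a b.
Proof.
move=> ar br IFa IPb; rewrite /llbar /taubar; case: pselect => [[]|_].
  by move=> E; rewrite E in ar.
  by move=> E; rewrite E in br.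
case: pselect => [e|ne]; last first.
  exfalso; apply: ne.
  have [q [qc qF qcof]] := IF_chain IFa (ex_intro _ r ar).
  have [p [pc pP pcof]] := IP_chain IPb (ex_intro _ r br).
  exists (q, p); split => //=.
  split.
    apply/seteqP; split => x.
      by move=> [_ [n _ <-] qx]; apply: fut_mem (qF n) qx; case: IFa.
    by move=> /qcof [n qx]; exists (q n) => //; exists n.
  split => //.
  apply/seteqP; split => x.
    by move=> [_ [n _ <-] qx]; apply: past_mem (pP n) qx; case: IPb.
  by move=> /pcof [n qx]; exists (p n) => //; exists n.
case: (cid e) => -[q p] [qc [qF [pc pP]]] /=.
move: ar br; rewrite -qF -pP => -[_ [k _ <-] qkr] [_ [m _ <-] rpm].
pose N := maxn k m.
have H0 : ll (q N) (p N).
  apply: (fc_mono pc (leq_maxr k m)).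
  apply: (pc_mono qc (leq_maxl k m)).
  exact: ll_trans qkr rpm.
pose u n := tau (q (n + N)%N, p (n + N)%N).
have Hu n : ll (q (n + N)%N) (p (n + N)%N) /\ (u n <= u n.+1)%E.
  elim: n => [|n [IH _]].
    rewrite add0n; split => //.
    have h1 := qc N; have h2 := pc N.
    have h3 : ll (q N.+1) (p N) := ll_trans h1 H0.
    case: Hlm => g0 [_ tri].
    rewrite /u add0n addSn.
    apply: le_trans (tri _ _ _ h3 h2).
    apply: lee_paddr; first exact: g0.
    apply: le_trans (tri _ _ _ h1 H0).
    by apply: lee_paddl; first exact: g0.
  have IH' : ll (q (n.+1 + N)%N) (p (n.+1 + N)%N).
    rewrite addSn; exact: ll_trans (qc _) (ll_trans IH (pc _)).
  split => //.
  have h1 := qc (n.+1 + N)%N; have h2 := pc (n.+1 + N)%N.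
  have h3 := ll_trans h1 IH'.
  case: Hlm => g0 [_ tri].
  rewrite /u [(n.+2 + N)%N]addSn.
  apply: le_trans (tri _ _ _ h3 h2).
  apply: lee_paddr; first exact: g0.
  apply: le_trans (tri _ _ _ h1 IH').
  by apply: lee_paddl; first exact: g0.
have nd : nondecreasing_seq u by apply/nondecreasing_seqP => n; case: (Hu n).
have cu := ereal_nondecreasing_cvgn nd.
have cv : (fun n => tau (q n, p n)) @ \oo --> ereal_sup (range u).
  by rewrite -(cvg_shiftn N).
rewrite (cvg_lim _ cv) //.
apply: lt_le_trans (ereal_sup_ubound _); last by exists 0%N.
by have := (Hu 0%N).1; rewrite /u add0n.
Qed.


Variable le : X -> X -> Prop.
Hypothesis Hfull : full tau.
Hypothesis HS : S_property tau.
Hypothesis Hcomp : compatible_causal tau le.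
Hypothesis Hgh : globally_hyperbolic le.

Lemma nbhs_pair1 (z y : X) V : nbhs (z, y) V -> nbhs y [set y' | V (z, y')].
Proof.
case=> -[A B] /= [nA nB] sAB; apply: filterS nB => y' By'.
by apply: sAB; split => //=; apply: nbhs_singleton.
Qed.

Lemma nbhs_pair2 (z y : X) V : nbhs (y, z) V -> nbhs y [set y' | V (y', z)].
Proof.
case=> -[A B] /= [nA nB] sAB; apply: filterS nA => y' Ay'.
by apply: sAB; split => //=; apply: nbhs_singleton.
Qed.

Lemma lsc_ll1 z y : ll z y -> nbhs y [set y' | ll z y'].
Proof.
move=> zy; case: Hlm => _ [lsc _].
have [V nV HV] := lsc (z, y) 0%R zy.
by apply: filterS (nbhs_pair1 nV) => y' /HV.
Qed.

Lemma lsc_ll2 z y : ll y z -> nbhs y [set y' | ll y' z].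
Proof.
move=> zy; case: Hlm => _ [lsc _].
have [V nV HV] := lsc (y, z) 0%R zy.
by apply: filterS (nbhs_pair2 nV) => y' /HV.
Qed.

Lemma Srel_pt y : Srel_ne tau (Ipast tau y) (Ifut tau y).
Proof.
have [H _] := HS y; have [f p] := Hfull y.
exact: (@cc_ne (Ipast tau y, Ifut tau y)).
Qed.

Lemma bounded_IP P p q : IP tau P -> future_chain tau p -> (forall n, P (p n)) ->
  (forall x, P x -> exists n, ll x (p n)) -> (forall n, ll (p n) q) ->
  exists F', Srel_ne tau P F'.
Proof.
move=> IPP pc Pp pcof pq.
have cK : compact (causal_diamond le (p 0%N) q) by case: Hgh.
have FK : (p @ \oo) (causal_diamond le (p 0%N) q).
  exists 0%N => // n _; split; last by case: Hcomp => _ [_ [H _]]; apply: H.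
  case: n => [|n]; first by case: Hcomp.
  case: Hcomp => _ [_ [H _]]; apply: H.
  exact: (fc_mono pc (isT : (1 <= n.+1)%N) (pc 0%N)).
have [y [_ cly]] := cK _ _ FK.
have sub1 : Ipast tau y `<=` P.
  move=> z zy; have := cly (range p) _ _ (lsc_ll1 zy).
  case; first by exists 0%N => // n _; exists n.
  move=> _ [[n _ <-] /= zn]; apply: past_mem (Pp n) zn; by case: IPP.
have sub2 : P `<=` Defs.down tau (Ifut tau y).
  move=> x /pcof [m xm]; exists (p m) => // w yw.
  have := cly (p @` [set n | (m < n)%N]) _ _ (lsc_ll2 yw).
  case; first by exists m.+1 => // n /= mn; exists n.
  move=> _ [[n /= mn <-] /= nw]; apply: ll_trans nw.
  exact: (fc_mono pc mn (pc m)).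
have [_ [_ [_ [_ [[_ [_ maxP] _]]]]]] := Srel_pt y.
have E := maxP P IPP sub1 sub2.
by exists (Ifut tau y); rewrite E; exact: Srel_pt.
Qed.


Lemma bounded_IF F q p : IF tau F -> past_chain tau q -> (forall n, F (q n)) ->
  (forall x, F x -> exists n, ll (q n) x) -> (forall n, ll p (q n)) ->
  exists P', Srel_ne tau P' F.
Proof.
move=> IFF qc Fq qcof pq.
have cK : compact (causal_diamond le p (q 0%N)) by case: Hgh.
have FK : (q @ \oo) (causal_diamond le p (q 0%N)).
  exists 0%N => // n _; split; first by case: Hcomp => _ [_ [H _]]; apply: H.
  case: n => [|n]; first by case: Hcomp.
  case: Hcomp => _ [_ [H _]]; apply: H.
  exact: (pc_mono qc (isT : (1 <= n.+1)%N) (qc 0%N)).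
have [y [_ cly]] := cK _ _ FK.
have sub1 : Ifut tau y `<=` F.
  move=> z zy; have := cly (range q) _ _ (lsc_ll2 zy).
  case; first by exists 0%N => // n _; exists n.
  move=> _ [[n _ <-] /= zn]; apply: fut_mem (Fq n) zn; by case: IFF.
have sub2 : F `<=` Defs.up tau (Ipast tau y).
  move=> x /qcof [m xm]; exists (q m) => // w yw.
  have := cly (q @` [set n | (m < n)%N]) _ _ (lsc_ll1 yw).
  case; first by exists m.+1 => // n /= mn; exists n.
  move=> _ [[n /= mn <-] /= nw]; apply: ll_trans nw _.
  exact: (pc_mono qc mn (qc m)).
have [_ [_ [_ [_ [_ [_ [_ maxF]]]]]]] := Srel_pt y.
have E := maxF F IFF sub1 sub2.
by exists (Ipast tau y); rewrite E; exact: Srel_pt.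
Qed.


Hypothesis Hbd : forall a b, cc_boundary tau a -> cc_boundary tau b ->
     le_taubar tau a b -> a = b.

Lemma cc_noF P : cc tau (P, set0) -> ~ exists F', Srel_ne tau P F'.
Proof. by case=> [[_ [_ [_ [[x]]]]]|[[_ [_ [_ H]]]|[_ [_ [[x]]]]]]. Qed.

Lemma cc_noP F : cc tau (set0, F) -> ~ exists P', Srel_ne tau P' F.
Proof. by case=> [[_ [[x]]]|[[_ [[x]]]|[_ [_ [_ H]]]]]. Qed.

Lemma notinj_F P : ~ range (cc_inj tau) (P, set0).
Proof.
move=> [x _ [_ E]]; have [[y fy] _] := Hfull x.
by rewrite E in fy.
Qed.

Lemma notinj_P F : ~ range (cc_inj tau) (set0, F).
Proof.
move=> [x _ [E _]]; have [_ [y fy]] := Hfull x.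
by rewrite E in fy.
Qed.

Lemma max_ii P : cc tau (P, set0) -> P !=set0 ->
  forall P', IP tau P' -> P `<=` P' -> P' = P.
Proof.
move=> ccP Pn P' IPP' PP'.
have IPP : IP tau P := @cc_IP (P, set0) ccP Pn.
have [p [pc Pp pcof]] := IP_chain IPP Pn.
have [[F' HF']|nF'] := pselect (exists F', Srel_ne tau P' F').
  exfalso; apply: (cc_noF ccP).
  case: HF' => _ [_ [_ [[q0 Fq0] [[_ [subP _]] _]]]].
  apply: (bounded_IP IPP pc Pp pcof (q := q0)) => n.
  have [r Hr pr] := subP _ (PP' _ (Pp n)).
  exact: ll_trans pr (Hr _ Fq0).
have P'n : P' !=set0 by case: Pn => x /PP' Px; exists x.
have ccP' : cc tau (P', set0) by right; left.
suff E : (P, @set0 X) = (P', @set0 X).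
  have H := congr1 fst E; simpl in H; by symmetry.
apply: Hbd.
- by split => //; exact: notinj_F.
- by split => //; exact: notinj_F.
- split.
    move=> b [ccb /llbar_meet [r [br Pr]]]; split => //.
    apply: (llbar_of (r := r)) => //=; first exact: PP'.
    by apply: (@cc_IF b) => //; exists r.
  by move=> c [_ /llbar_meet [r [[]]]].
Qed.

Lemma max_iii F : cc tau (set0, F) -> F !=set0 ->
  forall F', IF tau F' -> F `<=` F' -> F' = F.
Proof.
move=> ccF Fn F' IFF' FF'.
have IFF : IF tau F := @cc_IF (set0, F) ccF Fn.
have [q [qc Fq qcof]] := IF_chain IFF Fn.
have [[P' HP']|nP'] := pselect (exists P', Srel_ne tau P' F').
  exfalso; apply: (cc_noP ccF).
  case: HP' => _ [[p0 Pp0] [_ [_ [_ [_ [subF _]]]]]].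
  apply: (bounded_IF IFF qc Fq qcof (p := p0)) => n.
  have [r Hr pr] := subF _ (FF' _ (Fq n)).
  exact: ll_trans (Hr _ Pp0) pr.
have F'n : F' !=set0 by case: Fn => x /FF' Px; exists x.
have ccF' : cc tau (set0, F') by right; right.
suff E : (@set0 X, F') = (@set0 X, F).
  have H := congr1 snd E; simpl in H; by [].
apply: Hbd.
- by split => //; exact: notinj_P.
- by split => //; exact: notinj_P.
- split.
    by move=> c [_ /llbar_meet [r [_ []]]].
  move=> b [ccb /llbar_meet [r [Fr br]]]; split => //.
  apply: (llbar_of (r := r)) => //=; first exact: FF'.
  by apply: (@cc_IP b) => //; exists r.
Qed.


Definition W (op oq : option X) : set (set X * set X) :=
  [set d | cc tau d /\ (forall p, op = Some p -> d.1 p) /\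
           (forall q, oq = Some q -> d.2 q)].

Lemma W_open op oq : chr_open tau (W op oq).
Proof.
split; first by move=> d [].
split; first by move=> d [].
move=> s Cs d [ccd [H1 H2]]; split => //; move=> [_ [Hp Hq]].
have [N1 HN1] : exists N, forall n, (N <= n)%N ->
    forall p, op = Some p -> (s n).1 p.
  case E: op => [p|]; last by exists 0%N.
  have [N HN] := (H1 (ex_intro _ p (Hp p E))).1 p (Hp p E).
  by exists N => n Nn p' [<-]; apply: HN.
have [N2 HN2] : exists N, forall n, (N <= n)%N ->
    forall q, oq = Some q -> (s n).2 q.
  case E: oq => [q|]; last by exists 0%N.
  have [N HN] := (H2 (ex_intro _ q (Hq q E))).1 q (Hq q E).
  by exists N => n Nn q' [<-]; apply: HN.
have [ccs nW] := Cs (maxn N1 N2); apply: nW; split => //; split.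
  by apply: HN1; exact: leq_maxl.
by apply: HN2; exact: leq_maxr.
Qed.

Lemma W_convex op oq a b c : cc tau a -> cc tau b -> cc tau c ->
  llbar tau a b -> llbar tau b c -> W op oq a -> W op oq c -> W op oq b.
Proof.
move=> cca ccb ccc ab bc [_ [Ha _]] [_ [_ Hc]]; split => //; split.
  move=> p /Ha ap; have [r [ar br]] := llbar_meet ab.
  have [_ [_ [_ [_ [[_ [sub _]] _]]]]] := cc_ne cca (ex_intro _ p ap) (ex_intro _ r ar).
  have [z Hz pz] := sub _ ap.
  apply: (past_mem (y := r)) => //; last exact: ll_trans pz (Hz _ ar).
  by case: (cc_IP ccb (ex_intro _ r br)).
move=> q /Hc cq; have [r [br cr]] := llbar_meet bc.
have [_ [_ [_ [_ [_ [_ [sub _]]]]]]] := cc_ne ccc (ex_intro _ r cr) (ex_intro _ q cq).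
have [z Hz zq] := sub _ cq.
apply: (fut_mem (y := r)) => //; last exact: ll_trans (Hz _ cr) zq.
by case: (cc_IF ccb (ex_intro _ r br)).
Qed.

Lemma find_W a0 O : cc tau a0 -> chr_open tau O -> O a0 ->
  exists op oq, W op oq a0 /\ W op oq `<=` O.
Proof.
move=> cca0 [Occ [_ Ocl]] Oa0.
have [opf [HA HB]] : exists opf : nat -> option X,
    (forall n p, opf n = Some p -> a0.1 p) /\
    (a0.1 !=set0 -> forall x, a0.1 x -> exists N, forall n, (N <= n)%N ->
       exists p, opf n = Some p /\ ll x p).
  have [Pn|Pn] := pselect (a0.1 !=set0); last first.
    by exists (fun _ => None); split.
  have [p [pc Pp pcof]] := IP_chain (cc_IP cca0 Pn) Pn.
  exists (fun n => Some (p n)); split; first by move=> n p' [<-].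
  move=> _ x /pcof [k xk]; exists k => n kn; exists (p n); split => //.
  exact: (@fc_mono p pc k n kn x xk).
have [oqf [HA' HB']] : exists oqf : nat -> option X,
    (forall n q, oqf n = Some q -> a0.2 q) /\
    (a0.2 !=set0 -> forall x, a0.2 x -> exists N, forall n, (N <= n)%N ->
       exists q, oqf n = Some q /\ ll q x).
  have [Fn|Fn] := pselect (a0.2 !=set0); last first.
    by exists (fun _ => None); split.
  have [q [qc Fq qcof]] := IF_chain (cc_IF cca0 Fn) Fn.
  exists (fun n => Some (q n)); split; first by move=> n q' [<-].
  move=> _ x /qcof [k xk]; exists k => n kn; exists (q n); split => //.
  exact: (@pc_mono q qc k n kn x xk).
apply: contrapT => Hn.
have /choice [s Hs] : forall n, exists b, W (opf n) (oqf n) b /\ ~ O b.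
  move=> n; apply: contrapT => Hn2; apply: Hn; exists (opf n), (oqf n).
  split; first by split => //; split => [p /HA|q /HA'].
  move=> b Wb; apply: contrapT => nOb; apply: Hn2; by exists b.
have scc n : cc tau (s n) by case: (Hs n) => -[].
have LI1 : a0.1 !=set0 -> a0.1 `<=` LI (fun n => (s n).1).
  move=> Pn x /(HB Pn) [N HN]; exists N => n /HN [p [E xp]].
  have [[_ [Hp _]] _] := Hs n; have sp := Hp p E.
  apply: (past_mem (y := p)) => //.
  by case: (cc_IP (scc n) (ex_intro _ p sp)).
have LI2 : a0.2 !=set0 -> a0.2 `<=` LI (fun n => (s n).2).
  move=> Fn x /(HB' Fn) [N HN]; exists N => n /HN [q [E xq]].
  have [[_ [_ Hq]] _] := Hs n; have sq := Hq q E.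
  apply: (fut_mem (y := q)) => //.
  by case: (cc_IF (scc n) (ex_intro _ q sq)).
have LIS (A : nat -> set X) : LI A `<=` LS A.
  move=> x [N HN] M; exists (maxn N M); first exact: leq_maxr.
  by apply: HN; exact: leq_maxl.
have : Lchr tau s a0.
  split => //; split.
    move=> Pn; split; first exact: LI1.
    split; first exact: (cc_IP cca0 Pn).
    split; first by move=> x /(LI1 Pn) /LIS.
    move=> P' IPP' sub1 sub2.
    have [Fn|Fn] := pselect (a0.2 !=set0); last first.
      have E : a0.2 = set0 by apply/seteqP; split => // x ax; apply: Fn; exists x.
      have cc' : cc tau (a0.1, set0) by rewrite -E -surjective_pairing.
      exact: max_ii cc' Pn P' IPP' sub1.
    have [_ [_ [_ [_ [[_ [_ maxP]] _]]]]] := cc_ne cca0 Pn Fn.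
    apply: maxP => // x P'x.
    have [y P'y xy] := past_up IPP'.1 P'x.
    exists y => // f af.
    have [f' af' f'f] := fut_down (cc_IF cca0 Fn).1 af.
    have [N HN] := LI2 Fn _ af'.
    have [n Nn sny] := sub2 _ P'y N.
    have snf' := HN n Nn.
    have [_ [_ [_ [_ [[_ [subn _]] _]]]]] :=
      cc_ne (scc n) (ex_intro _ y sny) (ex_intro _ f' snf').
    have [z Hz yz] := subn _ sny.
    exact: ll_trans (ll_trans yz (Hz _ snf')) f'f.
  move=> Fn; split; first exact: LI2.
  split; first exact: (cc_IF cca0 Fn).
  split; first by move=> x /(LI2 Fn) /LIS.
  move=> F' IFF' sub1 sub2.
  have [Pn|Pn] := pselect (a0.1 !=set0); last first.
    have E : a0.1 = set0 by apply/seteqP; split => // x ax; apply: Pn; exists x.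
    have cc' : cc tau (set0, a0.2) by rewrite -E -surjective_pairing.
    exact: max_iii cc' Fn F' IFF' sub1.
  have [_ [_ [_ [_ [_ [_ [_ maxF]]]]]]] := cc_ne cca0 Pn Fn.
  apply: maxF => // x F'x.
  have [y F'y xy] := fut_down IFF'.1 F'x.
  exists y => // f af.
  have [f' af' f'f] := past_up (cc_IP cca0 Pn).1 af.
  have [N HN] := LI1 Pn _ af'.
  have [n Nn sny] := sub2 _ F'y N.
  have snf' := HN n Nn.
  have [_ [_ [_ [_ [_ [_ [subn _]]]]]]] :=
    cc_ne (scc n) (ex_intro _ f' snf') (ex_intro _ y sny).
  have [z Hz yz] := subn _ sny.
  exact: ll_trans f'f (ll_trans (Hz _ snf') yz).
move=> /(Ocl s) H.
have := H (fun n => conj (scc n) (Hs n).2).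
by case.
Qed.


Lemma main_sec (a0 : set X * set X) (U : set (set X * set X)) :
    cc tau a0 -> chr_nbhd tau U a0 ->
    exists V, chr_nbhd tau V a0 /\
      forall a b c, cc tau a -> cc tau b -> cc tau c ->
        llbar tau a b -> llbar tau b c -> V a -> V c -> U b.
Proof.
move=> cca0; case=> Z [Zo [Za0 ZU]].
have [op [oq [Wa0 WZ]]] := find_W cca0 Zo Za0.
exists (W op oq); split.
  by exists (W op oq); split; [exact: W_open | split].
move=> a b c cca ccb ccc ab bc Va Vc; apply: ZU; apply: WZ.
exact: (W_convex cca ccb ccc ab bc Va Vc).
Qed.

End Main.


Theorem mainTheorem11 (R : realType) (X : topologicalType)
  (tau : X * X -> \bar R) (le : X -> X -> Prop) :
  lorentzian_metric tau ->
  full tau -> separable tau -> chronologically_dense tau -> S_property tau ->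
  compatible_causal tau le -> globally_hyperbolic le ->
  (forall a b, cc_boundary tau a -> cc_boundary tau b ->
     le_taubar tau a b -> a = b) ->
  forall (a0 : set X * set X) (U : set (set X * set X)),
    cc tau a0 -> chr_nbhd tau U a0 ->
    exists V, chr_nbhd tau V a0 /\
      forall a b c, cc tau a -> cc tau b -> cc tau c ->
        llbar tau a b -> llbar tau b c -> V a -> V c -> U b.
Proof.
move=> Hlm Hfull Hsep _ HS Hcomp Hgh Hbd a0 U cca0 nU.
exact: (main_sec Hlm Hsep Hfull HS Hcomp Hgh Hbd cca0 nU).
Qed.
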